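(* Let $n=5$, let $x_1<x_2<\cdots<x_5$ be fixed real numbers and $Y_i=\beta_0+\beta_1x_i+\varepsilon_i$ ($i=1,\dots,5$) with unknown $\beta_0,\beta_1\in\mathbb{R}$ and $\varepsilon_1,\dots,\varepsilon_5$ i.i.d. with a continuous distribution. Let $s_1<s_2<\cdots<s_{10}$ be the ten slopes $S_{ij}=(Y_i-Y_j)/(x_i-x_j)$, $i<j$, sorted increasingly, and let $w_1<w_2<\cdots<w_{55}$ be the $55$ Walsh averages $(s_i+s_j)/2$, $1\le i\le j\le 10$, sorted increasingly. Define $p_1=P(\beta_1\in(s_2,s_9)\wedge 2s_2\le s_1+s_9\wedge s_2+s_{10}\le 2s_9)$, $p_2=P(\beta_1\in(s_2,s_{10})\wedge 2s_2\le s_1+s_9\wedge 2s_9<s_2+s_{10})$, $p_3=P(\beta_1\in(s_1,s_9)\wedge s_1+s_9<2s_2\wedge s_2+s_{10}\le 2s_9)$, $p_4=P(\beta_1\in(s_1,s_{10})\wedge s_1+s_9<2s_2\wedge 2s_9<s_2+s_{10})$. Then $P(\beta_1\in(w_9,w_{47}))\le p_1+p_2+p_3+p_4$.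
   Context: Ties among the slopes and among the Walsh averages occur with probability zero and are ignored. *)

(* Defs.v *)
From HB Require Import structures.
From mathcomp Require Import all_boot all_order all_algebra.
From mathcomp Require Import all_classical all_reals all_analysis.
Set Implicit Arguments. Unset Strict Implicit. Unset Printing Implicit Defensive.
Import Order.TTheory GRing.Theory Num.Theory.
Local Open Scope classical_set_scope.
Local Open Scope ring_scope.

Section Defs.
Context {R : realType}.

Definition pairs_lt (n : nat) : seq ('I_n * 'I_n) :=
  [seq ij <- [seq (i, j) | i : 'I_n <- enum 'I_n, j : 'I_n <- enum 'I_n] | (nat_of_ord ij.1 < nat_of_ord ij.2)%N].

Definition slopes (n : nat) (x Y : 'I_n -> R) : seq R :=
  [seq (Y ij.1 - Y ij.2) / (x ij.1 - x ij.2) | ij <- pairs_lt n].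

Definition walsh (s : seq R) : seq R :=
  [seq (s`_i + s`_j) / 2 | i <- iota 0 (size s), j <- iota i (size s - i)].

Definition sortR (s : seq R) : seq R := sort <=%R s.

(* 1-based access: nth1 s k = s_k *)
Definition nth1 (s : seq R) (k : nat) : R := nth 0 s k.-1.

End Defs.

Definition mutually_independent (d : measure_display) (T : measurableType d)
  (R : realType) (P : probability T R) (n : nat) (X : 'I_n -> T -> R) : Prop :=
  forall B : 'I_n -> set R, (forall i, measurable (B i)) ->
    P (\bigcap_(i in [set: 'I_n]) (X i @^-1` B i)) =
    (\prod_(i < n) P (X i @^-1` B i))%E.

(* Main.v *)
Require Import Defs.
From HB Require Import structures.
From mathcomp Require Import all_boot all_order all_algebra.
From mathcomp Require Import all_classical all_reals all_analysis.
From mathcomp Require Import lra zify measurable_realfun.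
Import Order.TTheory GRing.Theory Num.Theory.
Local Open Scope classical_set_scope.
Local Open Scope ring_scope.


Section Gen.
Variable R : realType.
Implicit Types (w l : seq R).
Definition ltp (c : R) : pred R := fun v => v < c.
Definition gtp (c : R) : pred R := fun v => c < v.

Lemma sortR_sorted l : sorted <=%R (sortR l).
Proof. by apply: sort_sorted => a b; exact: le_total. Qed.

Lemma sortR_count l (p : pred R) : count p (sortR l) = count p l.
Proof.
have pe : perm_eq (sortR l) l by rewrite /sortR perm_sort perm_refl.
by move/permP: pe => ->.
Qed.

Lemma size_sortR l : size (sortR l) = size l.
Proof. exact: size_sort. Qed.

Lemma take_le w k : sorted <=%R w -> (k < size w)%N ->
  all (fun v => v <= nth 0 w k) (take k.+1 w).
Proof.
move=> sw kw; apply/(all_nthP 0) => i; rewrite size_take => ik.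
have ik' : (i < k.+1)%N by move: ik; case: (ltnP k.+1 (size w)) => /= h1 h2; lia.
clear ik; rewrite nth_take //; apply: (sorted_leq_nth le_trans lexx) => //; rewrite ?inE. all: try lia. exact: leq_trans ik' kw. Qed.

Lemma drop_ge w k : sorted <=%R w -> (k < size w)%N ->
  all (fun v => nth 0 w k <= v) (drop k w).
Proof.
move=> sw kw; apply/(all_nthP 0) => i; rewrite size_drop => ik.
rewrite nth_drop; apply: (sorted_leq_nth le_trans lexx) => //; rewrite ?inE. all: try lia. by rewrite -ltn_subRL.
Qed.

Lemma count_take_drop (p : pred R) w k :
  count p w = (count p (take k w) + count p (drop k w))%N.
Proof. by rewrite -count_cat cat_take_drop. Qed.

Lemma count_all (p : pred R) s : all p s -> count p s = size s.
Proof. by rewrite all_count => /eqP. Qed.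

Lemma gt_nth_count w k c : sorted <=%R w -> (k < size w)%N ->
  (c < nth 0 w k) = (size w - k <= count (gtp c) w)%N.
Proof.
move=> sw kw; apply/idP/idP => H.
  have A : all (gtp c) (drop k w).
    by apply/allP => v /(allP (drop_ge _ _ sw kw)) /= hv; exact: lt_le_trans hv.
  by rewrite (count_take_drop _ _ k) (count_all _ _ A) size_drop leq_addl.
apply/negP => /negP; rewrite -leNgt => H2.
have A : all (predC (gtp c)) (take k.+1 w).
  by apply/allP => v /(allP (take_le _ _ sw kw)) /= hv; rewrite -leNgt (le_trans hv).
have := count_predC (gtp c) (take k.+1 w).
rewrite (count_all _ _ A) => /eqP; rewrite -{2}[size _]add0n eqn_add2r => /eqP C0.
move: H; rewrite (count_take_drop _ _ k.+1) C0 add0n.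
have := count_size (gtp c) (drop k.+1 w); rewrite size_drop => H3 H.
have := leq_trans H H3; rewrite subnS.
have : (0 < size w - k)%N by rewrite subn_gt0.
by case: (size w - k)%N => // n _ /=; rewrite ltnn.
Qed.

Lemma lowstat l c : (8 < size l)%N -> (count (ltp c) l <= 8)%N ->
  c <= nth 0 (sortR l) 8.
Proof.
move=> sl cl; rewrite leNgt; apply/negP => H.
have sz : (8 < size (sortR l))%N by rewrite size_sortR.
have A : all (ltp c) (take 9 (sortR l)).
  by apply/allP => v /(allP (take_le _ _ (sortR_sorted l) sz)) /= hv; exact: le_lt_trans hv H.
move: cl; rewrite -(sortR_count l) (count_take_drop _ _ 9) (count_all _ _ A) size_takel //.
Qed.

Lemma upstat l c : size l = 55%N -> (count (gtp c) l <= 8)%N ->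
  nth 0 (sortR l) 46 <= c.
Proof.
move=> sl cl; rewrite leNgt; apply/negP => H.
have sz : (46 < size (sortR l))%N by rewrite size_sortR sl.
move: H; rewrite (gt_nth_count _ _ c (sortR_sorted l) sz) sortR_count size_sortR sl /=.
by move=> H; have := leq_trans H cl.
Qed.


Lemma midge (a u v : R) : a <= u -> a <= v -> a <= (u + v) / 2.
Proof. move=> *; lra. Qed.
Lemma midle (a u v : R) : u <= a -> v <= a -> (u + v) / 2 <= a.
Proof. move=> *; lra. Qed.
Lemma lemB (b : bool) n m : (n <= m)%N -> (b + n <= m.+1)%N.
Proof. by case: b => //= H; apply: leqW. Qed.

Ltac killL c := repeat match goal with
| |- context [ ((?u + ?v) / 2 < c) ] =>
   let E := fresh in
   assert (E : c <= (u + v)/2) by first [assumption | apply: midge; assumption];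
   rewrite (ltNge ((u+v)/2) c) E /=; clear E
end.
Ltac killU c := repeat match goal with
| |- context [ (c < (?u + ?v) / 2) ] =>
   let E := fresh in
   assert (E : (u + v)/2 <= c) by first [assumption | apply: midle; assumption];
   rewrite (ltNge c ((u+v)/2)) E /=; clear E
end.
Ltac fin := rewrite ?add0n ?addn0; do ?apply: lemB; by [|exact: leq_b1].

Lemma cnt0 (a0 a1 a2 a3 a4 a5 a6 a7 a8 a9 : R) :
  a0 <= a1 -> a1 <= a2 -> a2 <= a3 -> a3 <= a4 -> a4 <= a5 -> a5 <= a6 -> a6 <= a7 -> a7 <= a8 -> a8 <= a9 ->
  (count (ltp a0) (walsh [:: a0; a1; a2; a3; a4; a5; a6; a7; a8; a9]) <= 8)%N.
Proof.
move=> h0 h1 h2 h3 h4 h5 h6 h7 h8.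
have g0 : a0 <= a0 by [].
have g1 : a0 <= a1 by lra.
have g2 : a0 <= a2 by lra.
have g3 : a0 <= a3 by lra.
have g4 : a0 <= a4 by lra.
have g5 : a0 <= a5 by lra.
have g6 : a0 <= a6 by lra.
have g7 : a0 <= a7 by lra.
have g8 : a0 <= a8 by lra.
have g9 : a0 <= a9 by lra.
rewrite /ltp /walsh /=.
killL a0. fin.
Qed.

Lemma cnt1 (a0 a1 a2 a3 a4 a5 a6 a7 a8 a9 : R) :
  a0 <= a1 -> a1 <= a2 -> a2 <= a3 -> a3 <= a4 -> a4 <= a5 -> a5 <= a6 -> a6 <= a7 -> a7 <= a8 -> a8 <= a9 ->
  2 * a1 <= a0 + a8 ->
  (count (ltp a1) (walsh [:: a0; a1; a2; a3; a4; a5; a6; a7; a8; a9]) <= 8)%N.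
Proof.
move=> h0 h1 h2 h3 h4 h5 h6 h7 h8 H.
have g1 : a1 <= a1 by [].
have g2 : a1 <= a2 by lra.
have g3 : a1 <= a3 by lra.
have g4 : a1 <= a4 by lra.
have g5 : a1 <= a5 by lra.
have g6 : a1 <= a6 by lra.
have g7 : a1 <= a7 by lra.
have g8 : a1 <= a8 by lra.
have g9 : a1 <= a9 by lra.
have s8 : a1 <= (a0 + a8) / 2 by lra.
have s9 : a1 <= (a0 + a9) / 2 by lra.
rewrite /ltp /walsh /=.
killL a1. fin.
Qed.

Lemma cnt9 (a0 a1 a2 a3 a4 a5 a6 a7 a8 a9 : R) :
  a0 <= a1 -> a1 <= a2 -> a2 <= a3 -> a3 <= a4 -> a4 <= a5 -> a5 <= a6 -> a6 <= a7 -> a7 <= a8 -> a8 <= a9 ->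
  (count (gtp a9) (walsh [:: a0; a1; a2; a3; a4; a5; a6; a7; a8; a9]) <= 8)%N.
Proof.
move=> h0 h1 h2 h3 h4 h5 h6 h7 h8.
have g0 : a0 <= a9 by lra.
have g1 : a1 <= a9 by lra.
have g2 : a2 <= a9 by lra.
have g3 : a3 <= a9 by lra.
have g4 : a4 <= a9 by lra.
have g5 : a5 <= a9 by lra.
have g6 : a6 <= a9 by lra.
have g7 : a7 <= a9 by lra.
have g8 : a8 <= a9 by lra.
have g9 : a9 <= a9 by [].
rewrite /gtp /walsh /=.
killU a9. fin.
Qed.

Lemma cnt8 (a0 a1 a2 a3 a4 a5 a6 a7 a8 a9 : R) :
  a0 <= a1 -> a1 <= a2 -> a2 <= a3 -> a3 <= a4 -> a4 <= a5 -> a5 <= a6 -> a6 <= a7 -> a7 <= a8 -> a8 <= a9 ->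
  a1 + a9 <= 2 * a8 ->
  (count (gtp a8) (walsh [:: a0; a1; a2; a3; a4; a5; a6; a7; a8; a9]) <= 8)%N.
Proof.
move=> h0 h1 h2 h3 h4 h5 h6 h7 h8 H.
have g0 : a0 <= a8 by lra.
have g1 : a1 <= a8 by lra.
have g2 : a2 <= a8 by lra.
have g3 : a3 <= a8 by lra.
have g4 : a4 <= a8 by lra.
have g5 : a5 <= a8 by lra.
have g6 : a6 <= a8 by lra.
have g7 : a7 <= a8 by lra.
have g8 : a8 <= a8 by [].
have s0 : (a0 + a9) / 2 <= a8 by lra.
have s1 : (a1 + a9) / 2 <= a8 by lra.
rewrite /gtp /walsh /=.
killU a8. fin.
Qed.

End Gen.

Arguments ltp {R}. Arguments gtp {R}.
Arguments lowstat {R}. Arguments upstat {R}. Arguments sortR_sorted {R}. Arguments size_sortR {R}.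
Arguments cnt0 {R a0 a1 a2 a3 a4 a5 a6 a7 a8 a9}. Arguments cnt1 {R a0 a1 a2 a3 a4 a5 a6 a7 a8 a9}. Arguments cnt8 {R a0 a1 a2 a3 a4 a5 a6 a7 a8 a9}. Arguments cnt9 {R a0 a1 a2 a3 a4 a5 a6 a7 a8 a9}.
Lemma enum5 : enum 'I_5 = [:: @Ordinal 5 0 isT; @Ordinal 5 1 isT; @Ordinal 5 2 isT; @Ordinal 5 3 isT; @Ordinal 5 4 isT].
Proof. by apply: (inj_map val_inj); rewrite val_enum_ord. Qed.
Lemma szp : size (pairs_lt 5) = 10%N.
Proof. by rewrite /pairs_lt enum5. Qed.


Section Det.
Variable R : realType.

Lemma det (L : seq R) b : size L = 10%N -> sorted <=%R L ->
  nth1 (sortR (walsh L)) 9 < b < nth1 (sortR (walsh L)) 47 ->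
  (((nth1 L 2 < b < nth1 L 9 /\ 2 * nth1 L 2 <= nth1 L 1 + nth1 L 9
      /\ nth1 L 2 + nth1 L 10 <= 2 * nth1 L 9) \/
    (nth1 L 2 < b < nth1 L 10 /\ 2 * nth1 L 2 <= nth1 L 1 + nth1 L 9
      /\ 2 * nth1 L 9 < nth1 L 2 + nth1 L 10)) \/
    (nth1 L 1 < b < nth1 L 9 /\ nth1 L 1 + nth1 L 9 < 2 * nth1 L 2
      /\ nth1 L 2 + nth1 L 10 <= 2 * nth1 L 9)) \/
    (nth1 L 1 < b < nth1 L 10 /\ nth1 L 1 + nth1 L 9 < 2 * nth1 L 2
      /\ 2 * nth1 L 9 < nth1 L 2 + nth1 L 10).
Proof.
move=> sL sorL.
have sW : size (walsh L) = 55%N by rewrite /walsh sL.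
have lo c : (count (ltp c) (walsh L) <= 8)%N -> c <= nth1 (sortR (walsh L)) 9.
  by move=> h; apply: lowstat; rewrite ?sW.
have up c : (count (gtp c) (walsh L) <= 8)%N -> nth1 (sortR (walsh L)) 47 <= c.
  by move=> h; apply: upstat.
move: lo up; generalize (nth1 (sortR (walsh L)) 9) (nth1 (sortR (walsh L)) 47) => W9 W47 lo up.
move=> /andP[hb1 hb2].
clear sW; case: L sL sorL lo up => [|a0 [|a1 [|a2 [|a3 [|a4 [|a5 [|a6 [|a7 [|a8 [|a9 [|? ?]]]]]]]]]]] // _.
move=> /= /andP[h0 /andP[h1 /andP[h2 /andP[h3 /andP[h4 /andP[h5 /andP[h6 /andP[h7 /andP[h8 _]]]]]]]]] lo up.
have L0 := lo a0 (cnt0 h0 h1 h2 h3 h4 h5 h6 h7 h8).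
have U9 := up a9 (cnt9 h0 h1 h2 h3 h4 h5 h6 h7 h8).
rewrite /nth1 /=.
case: (lerP (2 * a1) (a0 + a8)) => H1; case: (lerP (a1 + a9) (2 * a8)) => H2.
- have L1 := lo a1 (cnt1 h0 h1 h2 h3 h4 h5 h6 h7 h8 H1).
  have U8 := up a8 (cnt8 h0 h1 h2 h3 h4 h5 h6 h7 h8 H2).
  left; left; left; split => //; apply/andP; split; lra.
- have L1 := lo a1 (cnt1 h0 h1 h2 h3 h4 h5 h6 h7 h8 H1).
  left; left; right; split => //; apply/andP; split; lra.
- have U8 := up a8 (cnt8 h0 h1 h2 h3 h4 h5 h6 h7 h8 H2).
  left; right; split => //; apply/andP; split; lra.
- right; split => //; apply/andP; split; lra.
Qed.
End Det.
Arguments det {R}.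


Section Meas.
Context d (T : measurableType d) (R : realType).

Lemma predS (j n : nat) : (j <= n.+1)%N = (j.-1 <= n)%N.
Proof. by case: j. Qed.

Lemma count_meas (I : Type) (idx : seq I) (F : I -> T -> R) (c : R) :
  (forall i, measurable_fun setT (F i)) -> forall j,
  measurable_fun setT (fun t => (j <= count (gtp c) [seq F i t | i <- idx])%N).
Proof.
move=> mF; elim: idx => [|i idx IH] j /=.
  exact: measurable_cst.
rewrite (_ : (fun t => _) = (fun t => if c < F i t then
    (j.-1 <= count (gtp c) [seq F i t | i <- idx])%N
  else (j <= count (gtp c) [seq F i t | i <- idx])%N)); last first.
  by apply/funext => t; rewrite /gtp; case: (c < F i t) => /=; rewrite ?add1n ?add0n ?predS.
apply: measurable_fun_if => //.
- by apply: measurable_fun_ltr => //; exact: measurable_cst.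
- by apply: measurable_funS (IH _) => //.
- by apply: measurable_funS (IH _) => //.
Qed.

Lemma os_meas (I : Type) (idx : seq I) (F : I -> T -> R) k :
  (forall i, measurable_fun setT (F i)) ->
  measurable_fun setT (fun t => nth 0 (sortR [seq F i t | i <- idx]) k).
Proof.
move=> mF; case: (ltnP k (size idx)) => kidx; last first.
  rewrite (_ : (fun t => _) = cst 0); first exact: measurable_cst.
  by apply/funext => t; rewrite nth_default // size_sortR size_map.
apply: (measurability _ (RGenOInfty.measurableE R)) => //.
move=> _ [_ [x ->] <-].
have mc := @count_meas I idx F x mF (size idx - k).
rewrite (_ : _ `&` _ = setT `&` (fun t => (size idx - k <= count (gtp x) [seq F i t | i <- idx])%N) @^-1` [set true]).
  by apply: mc.
apply/seteqP; split => t /= [_ H]; split => //; move: H.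
  rewrite in_itv /= andbT gt_nth_count ?sortR_sorted ?size_sortR ?size_map //.
  by rewrite sortR_count.
rewrite in_itv /= andbT gt_nth_count ?sortR_sorted ?size_sortR ?size_map //.
by rewrite sortR_count.
Qed.

Lemma msetb (b : T -> bool) : measurable_fun setT b -> measurable [set t | b t].
Proof. by move=> mb; rewrite -[X in measurable X]setTI; apply: mb. Qed.

Lemma msetb3 (a b c : T -> bool) : measurable_fun setT a -> measurable_fun setT b ->
  measurable_fun setT c -> measurable [set t | a t /\ b t /\ c t].
Proof.
move=> ma mb mc.
have := msetb _ (measurable_and ma (measurable_and mb mc)).
rewrite (_ : [set t | a t /\ b t /\ c t] = [set t | a t && (b t && c t)]) //.
by apply/seteqP; split => t /=; [case=> -> [-> ->] | case/and3P => -> -> ->].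
Qed.

End Meas.
Arguments os_meas {d T R I}. Arguments msetb {d T}. Arguments msetb3 {d T}.


Ltac mt := repeat first [ match goal with H : _ |- _ => exact: H end | exact: measurable_cst | apply: measurable_and | apply: measurable_fun_ltr | apply: measurable_fun_ler | apply: measurable_funD | apply: measurable_funM ].

Lemma main (d : measure_display) (T : measurableType d) (R : realType)
  (P : probability T R) (x : 'I_5 -> R) (beta0 beta1 : R)
  (eps : 'I_5 -> T -> R) (meps : forall i, measurable_fun [set: T] (eps i))
  (s w : T -> nat -> R) :
  s = (fun t k => nth1 (sortR (slopes x (fun i => beta0 + beta1 * x i + eps i t))) k) ->
  w = (fun t k => nth1 (sortR (walsh (sortR (slopes x (fun i => beta0 + beta1 * x i + eps i t))))) k) ->
  (P [set t | (w t 9%N < beta1 < w t 47%N)%R] <=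
   P [set t | (s t 2%N < beta1 < s t 9%N /\ 2 * s t 2%N <= s t 1%N + s t 9%N
                       /\ s t 2%N + s t 10%N <= 2 * s t 9%N)%R] +
   P [set t | (s t 2%N < beta1 < s t 10%N /\ 2 * s t 2%N <= s t 1%N + s t 9%N
                       /\ 2 * s t 9%N < s t 2%N + s t 10%N)%R] +
   P [set t | (s t 1%N < beta1 < s t 9%N /\ s t 1%N + s t 9%N < 2 * s t 2%N
                       /\ s t 2%N + s t 10%N <= 2 * s t 9%N)%R] +
   P [set t | (s t 1%N < beta1 < s t 10%N /\ s t 1%N + s t 9%N < 2 * s t 2%N
                       /\ 2 * s t 9%N < s t 2%N + s t 10%N)%R])%E.
Proof.
move=> hs hw.
pose F := fun (ij : 'I_5 * 'I_5) (t : T) =>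
  ((beta0 + beta1 * x ij.1 + eps ij.1 t) - (beta0 + beta1 * x ij.2 + eps ij.2 t)) / (x ij.1 - x ij.2).
have mF ij : measurable_fun setT (F ij).
  rewrite /F; apply: measurable_funM; last exact: measurable_cst.
  by apply: measurable_funB; apply: measurable_funD => //; exact: measurable_cst.
have mS k : measurable_fun setT (fun t => s t k).
  by rewrite hs; exact: (os_meas (pairs_lt 5) F k.-1 mF).
pose idx2 := [seq (i, j) | i <- iota 0 10, j <- iota i (10 - i)].
pose G := fun (ij : nat * nat) (t : T) => (s t ij.1.+1 + s t ij.2.+1) / 2.
have wE t k : w t k = nth 0 (sortR [seq G ij t | ij <- idx2]) k.-1.
  rewrite hw /nth1 /G hs; congr (nth 0 (sortR _) _).
  by rewrite /walsh size_sortR /slopes size_map szp map_allpairs.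
have mW k : measurable_fun setT (fun t => w t k).
  rewrite (_ : (fun t => w t k) = fun t => nth 0 (sortR [seq G ij t | ij <- idx2]) k.-1).
    apply: os_meas => ij; apply: measurable_funM; last exact: measurable_cst.
    by apply: measurable_funD; exact: mS.
  by apply/funext => t; rewrite wE.
set B0 := [set t | (w t 9%N < beta1 < w t 47%N)%R].
set B1 := [set t | (s t 2%N < beta1 < s t 9%N /\ 2 * s t 2%N <= s t 1%N + s t 9%N
                       /\ s t 2%N + s t 10%N <= 2 * s t 9%N)%R].
set B2 := [set t | (s t 2%N < beta1 < s t 10%N /\ 2 * s t 2%N <= s t 1%N + s t 9%N
                       /\ 2 * s t 9%N < s t 2%N + s t 10%N)%R].
set B3 := [set t | (s t 1%N < beta1 < s t 9%N /\ s t 1%N + s t 9%N < 2 * s t 2%N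
                       /\ s t 2%N + s t 10%N <= 2 * s t 9%N)%R].
set B4 := [set t | (s t 1%N < beta1 < s t 10%N /\ s t 1%N + s t 9%N < 2 * s t 2%N
                       /\ 2 * s t 9%N < s t 2%N + s t 10%N)%R].
have mA0 : measurable B0 by rewrite /B0; refine (msetb _ _); mt.
have mA1 : measurable B1 by rewrite /B1; refine (msetb3 _ _ _ _ _ _); mt.
have mA2 : measurable B2 by rewrite /B2; refine (msetb3 _ _ _ _ _ _); mt.
have mA3 : measurable B3 by rewrite /B3; refine (msetb3 _ _ _ _ _ _); mt.
have mA4 : measurable B4 by rewrite /B4; refine (msetb3 _ _ _ _ _ _); mt.
have sub : B0 `<=` B1 `|` B2 `|` B3 `|` B4.
  move=> t; rewrite /B0 /B1 /B2 /B3 /B4 /= hw hs => H.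
  apply: (det (sortR (slopes x (fun i => beta0 + beta1 * x i + eps i t))) beta1 _ (sortR_sorted _) H).
  by rewrite size_sortR /slopes size_map szp.
have m12 := measurableU _ _ mA1 mA2.
have m123 := measurableU _ _ m12 mA3.
have m1234 := measurableU _ _ m123 mA4.
apply: (le_trans (@le_measure _ _ _ P _ _ (mem_set mA0) (mem_set m1234) sub)).
apply: (le_trans (@measureU2 _ _ _ P _ _ m123 mA4)); apply: leeD2r.
apply: (le_trans (@measureU2 _ _ _ P _ _ m12 mA3)); apply: leeD2r.
exact: (@measureU2 _ _ _ P _ _ mA1 mA2).
Qed.

Theorem theorem4 (d : measure_display) (T : measurableType d) (R : realType)
  (P : probability T R) (x : 'I_5 -> R) (beta0 beta1 : R)
  (eps : 'I_5 -> T -> R) :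
  (forall i j : 'I_5, (i < j)%N -> x i < x j) ->
  (forall i, measurable_fun [set: T] (eps i)) ->
  mutually_independent P eps ->
  (forall i (B : set R), measurable B ->
     P (eps i @^-1` B) = P (eps ord0 @^-1` B)) ->
  (forall a : R, P (eps ord0 @^-1` [set a]) = 0%E) ->
  let s (t : T) (k : nat) : R :=
    nth1 (sortR (slopes x (fun i => beta0 + beta1 * x i + eps i t))) k in
  let w (t : T) (k : nat) : R :=
    nth1 (sortR (walsh (sortR (slopes x (fun i => beta0 + beta1 * x i + eps i t))))) k in
  let p1 := P [set t | s t 2%N < beta1 < s t 9%N /\ 2 * s t 2%N <= s t 1%N + s t 9%N
                       /\ s t 2%N + s t 10%N <= 2 * s t 9%N] in
  let p2 := P [set t | s t 2%N < beta1 < s t 10%N /\ 2 * s t 2%N <= s t 1%N + s t 9%N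
                       /\ 2 * s t 9%N < s t 2%N + s t 10%N] in
  let p3 := P [set t | s t 1%N < beta1 < s t 9%N /\ s t 1%N + s t 9%N < 2 * s t 2%N
                       /\ s t 2%N + s t 10%N <= 2 * s t 9%N] in
  let p4 := P [set t | s t 1%N < beta1 < s t 10%N /\ s t 1%N + s t 9%N < 2 * s t 2%N
                       /\ 2 * s t 9%N < s t 2%N + s t 10%N] in
  let p0 := P [set t | w t 9%N < beta1 < w t 47%N] in
  (p0 <= p1 + p2 + p3 + p4)%E.
Proof.
move=> hx meps _ _ _; exact (@main d T R P x beta0 beta1 eps meps _ _ erefl erefl).
Qed.
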